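(* For every parsummable category $\mathcal C$ (and the fixed injection $\phi\colon\omega\times\omega\to\omega$), the functor $S_{\mathcal C}\colon\Theta(\mathcal C)\to\mathcal C$ is an equivalence of categories. For varying $\mathcal C$, these functors form a natural transformation $\mathrm{forget}\circ\Theta\Rightarrow\mathrm{forget}$ of functors $\mathbf{ParSumCat}\to\mathbf{Cat}$, i.e. $S_{\mathcal D}\circ\Theta(F)=F\circ S_{\mathcal C}$ for every morphism $F\colon\mathcal C\to\mathcal D$ of parsummable categories.
   Context: Let $\omega=\{1,2,\dots\}$, $\mathbf m=\{1,\dots,m\}$, $\mathcal M$ the monoid of injections $\omega\to\omega$. A parsummable category is a small $E\mathcal M$-category (strict action of the chaotic category on $\mathcal M$; $u_*$ the action, $[v,u]\colon u_*\Rightarrow v_*$) all of whose objects have finite support (intersection of finite $A\subset\omega$ with $u_*X=X$ for all $u$ fixing $A$ pointwise), with an object $0$ of empty support and a strictly unital, associative, commutative, equivariant sum on disjointly supported pairs; morphisms ($\mathbf{ParSumCat}$) are equivariant functors preserving $0,+$; $\mathrm{forget}$ is the forgetful functor to $\mathbf{Cat}$. For a finite set $A$, injections $\phi,\phi'\colon A\times\omega\to\omega$ and $X_\bullet=(X_a)_{a\in A}$: $\phi_*(X_\bullet)=\sum_a\phi(a,-)_*(X_a)$, $[\phi',\phi]_{X_\bullet}=\sum_a[\phi'(a,-),\phi(a,-)]_{X_a}$. $\Sigma(\mathcal C)$ is the permutative category with objects finite sequences of objects of $\mathcal C$ (unit the empty sequence $\epsilon$), morphisms $(X_1,\dots,X_m)\to(Y_1,\dots,Y_n)$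 classes $[\psi,f,\phi]$ (injections $\phi\colon\mathbf m\times\omega\to\omega$, $\psi\colon\mathbf n\times\omega\to\omega$, $f\colon\phi_*(X_\bullet)\to\psi_*(Y_\bullet)$) modulo $(\psi,f,\phi)\sim(\psi',[\psi',\psi]f[\phi,\phi'],\phi')$, composition $[\rho,g,\theta][\psi,f,\phi]=[\rho,g[\theta,\psi]f,\phi]$, tensor product concatenation and $[\psi,f,\phi]\otimes[\rho,g,\theta]=[\psi+\rho,f+g,\phi+\theta]$ for disjoint-image representatives, symmetry $[\bar\phi,\mathrm{id},\phi]$; $\Sigma(F)$ applies $F$ entrywise and sends $[\psi,f,\phi]$ to $[\psi,Ff,\phi]$. For a small permutative category $\mathscr P$, $\Phi(\mathscr P)$ is the parsummable category of sequences $(P_1,P_2,\dots)$ with almost all $P_i=\mathbf 1$, morphisms $P\to Q$ being morphisms $\bigotimes_iP_i\to\bigotimes_iQ_i$ in $\mathscr P$; $\Phi(F)$ applies $F$ entrywise and on morphisms. $\Theta(\mathcal C)$ is the full parsummable subcategory of $\Phi\Sigma(\mathcal C)$ on sequences each of whose entries is $\epsilon$ or a $1$-tuple; $\Theta$ is a subfunctor of $\Phi\Sigma$. For finite $A\subset\omega$ and $X_\bullet=(X_a)_{a\in A}$, $\langle A,X_\bullet\rangle$ has $i$-th entry $(X_i)$ for $i\in A$ and $\epsilon$ otherwise; every object of $\Theta(\mathcal C)$ is uniquely of this form. With $\kappa_A\colon\{1,\dots,|A|\}\to A$ the order-preserving bijection and $\kappa_A^*X_\bullet=(X_{\kappa_A(1)},\dots,X_{\kappa_A(|A|)})$,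 a morphism $\langle A,X_\bullet\rangle\to\langle B,Y_\bullet\rangle$ in $\Theta(\mathcal C)$ is a morphism $\kappa_A^*X_\bullet\to\kappa_B^*Y_\bullet$ in $\Sigma(\mathcal C)$. Fix an injection $\phi\colon\omega\times\omega\to\omega$. $S_{\mathcal C}\langle A,X_\bullet\rangle=(\phi|_A)_*(X_\bullet)$ ($\phi|_A$ the restriction to $A\times\omega$); a morphism $\alpha$ has a unique representative $(\phi|_B\circ(\kappa_B\times\mathrm{id}),f,\phi|_A\circ(\kappa_A\times\mathrm{id}))$ and $S_{\mathcal C}(\alpha)=f$; this is a well-defined functor $\Theta(\mathcal C)\to\mathcal C$. *)

(* Defs.v *)
From Stdlib Require Import ClassicalEpsilon Relation_Operators.
From mathcomp Require Import all_boot.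

Set Implicit Arguments.
Unset Strict Implicit.
Unset Printing Implicit Defensive.

Record precat := PreCat {
  Ob : Type;
  Hom : Ob -> Ob -> Type;
  idm : forall X, Hom X X;
  comp : forall X Y Z, Hom Y Z -> Hom X Y -> Hom X Z }.
Arguments Hom {p} X Y.
Arguments idm {p} X.
Arguments comp {p X Y Z} g f.

Definition is_category (C : precat) : Prop :=
  (forall (X Y : Ob C) (f : Hom X Y), comp (idm Y) f = f) /\
  (forall (X Y : Ob C) (f : Hom X Y), comp f (idm X) = f) /\
  (forall (X Y Z W : Ob C) (f : Hom X Y) (g : Hom Y Z) (h : Hom Z W),
      comp h (comp g f) = comp (comp h g) f).

Definition castH (C : precat) (X X' Y Y' : Ob C) (e1 : X = X') (e2 : Y = Y')
  (f : Hom X Y) : Hom X' Y' :=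
  match e1 in _ = X1 return Hom X1 Y' with
  | erefl => match e2 in _ = Y1 return Hom X Y1 with erefl => f end
  end.

Definition heq (C : precat) (X Y X' Y' : Ob C) (f : Hom X Y) (g : Hom X' Y') : Prop :=
  exists (e1 : X = X') (e2 : Y = Y'), castH e1 e2 f = g.

Record functor (C D : precat) := Functor {
  fob : Ob C -> Ob D;
  fhom : forall X Y : Ob C, Hom X Y -> Hom (fob X) (fob Y) }.
Arguments fob {C D} f X.
Arguments fhom {C D} f {X Y} g.

Definition is_functor (C D : precat) (F : functor C D) : Prop :=
  (forall X : Ob C, fhom F (idm X) = idm (fob F X)) /\
  (forall (X Y Z : Ob C) (f : Hom X Y) (g : Hom Y Z),
      fhom F (comp g f) = comp (fhom F g) (fhom F f)).

Definition fid (C : precat) : functor C C :=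
  @Functor C C (fun X => X) (fun X Y f => f).
Definition fcomp (C D E : precat) (G : functor D E) (F : functor C D) : functor C E :=
  @Functor C E (fun X => fob G (fob F X)) (fun X Y f => fhom G (fhom F f)).

Definition is_iso (C : precat) (X Y : Ob C) (f : Hom X Y) : Prop :=
  exists g : Hom Y X, comp g f = idm X /\ comp f g = idm Y.

Definition nat_iso (C D : precat) (F G : functor C D) : Prop :=
  exists eta : forall X : Ob C, Hom (fob F X) (fob G X),
    (forall X, is_iso (eta X)) /\
    (forall (X Y : Ob C) (f : Hom X Y), comp (fhom G f) (eta X) = comp (eta Y) (fhom F f)).

Definition is_equivalence (C D : precat) (F : functor C D) : Prop :=
  is_functor F /\
  exists G : functor D C,
    is_functor G /\ nat_iso (fid C) (fcomp G F) /\ nat_iso (fcomp F G) (fid D).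

Record inj := Inj { injf :> nat -> nat; injP : injective injf }.
Definition icomp (u v : inj) : inj := @Inj (u \o v) (inj_comp (@injP u) (@injP v)).
Definition iid : inj := @Inj id (@inj_id nat).

(* Data: a small category, the action of EM (push u = u_*, and
   actm u v f = image of the morphism ((u -> v), f) of EM x C, so that
   [v,u]_X = actm u v (idm X)), the object 0, and the sum functor on
   objects and morphisms (meaningful on disjointly supported pairs). *)
Record psdata := PSData {
  ps_cat :> precat;
  push : inj -> Ob ps_cat -> Ob ps_cat;
  actm : forall (u v : inj) (X Y : Ob ps_cat), Hom X Y -> Hom (push u X) (push v Y);
  zero : Ob ps_cat;
  add : Ob ps_cat -> Ob ps_cat -> Ob ps_cat;
  addm : forall (X X' Y Y' : Ob ps_cat), Hom X X' -> Hom Y Y' -> Hom (add X Y) (add X' Y') }.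
Arguments push {p} u X.
Arguments actm {p} u v {X Y} f.
Arguments zero p : clear implicits.
Arguments add {p} X Y.
Arguments addm {p X X' Y Y'} f g.

Definition brack (C : psdata) (v u : inj) (X : Ob C) : Hom (push u X) (push v X) :=
  actm u v (idm X).

Definition supports (C : psdata) (A : seq nat) (X : Ob C) : Prop :=
  forall u : inj, (forall a, a \in A -> u a = a) -> push u X = X.

Definition supp (C : psdata) (X : Ob C) (i : nat) : Prop :=
  forall A : seq nat, supports A X -> i \in A.

Definition disj (C : psdata) (X Y : Ob C) : Prop :=
  forall i, supp X i -> supp Y i -> False.

Definition is_parsummable (C : psdata) : Prop :=
  is_category C
  /\ (forall (u : inj) (X : Ob C), actm u u (idm X) = idm (push u X))
  /\ (forall (u v w : inj) (X Y Z : Ob C) (f : Hom X Y) (g : Hom Y Z),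
        comp (actm v w g) (actm u v f) = actm u w (comp g f))
  /\ (forall (u v : inj) (X : Ob C), push (icomp u v) X = push u (push v X))
  /\ (forall (u v u' v' : inj) (X Y : Ob C) (f : Hom X Y),
        heq (actm (icomp u u') (icomp v v') f) (actm u v (actm u' v' f)))
  /\ (forall X : Ob C, push iid X = X)
  /\ (forall (X Y : Ob C) (f : Hom X Y), heq (actm iid iid f) f)
  /\ (forall X : Ob C, exists A : seq nat, supports A X)
  /\ (forall i, ~ supp (zero C) i)
  /\ (forall X Y : Ob C, disj X Y -> addm (idm X) (idm Y) = idm (add X Y))
  /\ (forall (X X' X'' Y Y' Y'' : Ob C) (f : Hom X X') (f' : Hom X' X'')
             (g : Hom Y Y') (g' : Hom Y' Y''),
        disj X Y -> disj X' Y' -> disj X'' Y'' ->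
        addm (comp f' f) (comp g' g) = comp (addm f' g') (addm f g))
  /\ (forall X : Ob C, add X (zero C) = X)
  /\ (forall (X X' : Ob C) (f : Hom X X'), heq (addm f (idm (zero C))) f)
  /\ (forall X Y Z : Ob C, disj X Y -> disj X Z -> disj Y Z ->
        add (add X Y) Z = add X (add Y Z))
  /\ (forall (X X' Y Y' Z Z' : Ob C) (f : Hom X X') (g : Hom Y Y') (h : Hom Z Z'),
        disj X Y -> disj X Z -> disj Y Z -> disj X' Y' -> disj X' Z' -> disj Y' Z' ->
        heq (addm (addm f g) h) (addm f (addm g h)))
  /\ (forall X Y : Ob C, disj X Y -> add X Y = add Y X)
  /\ (forall (X X' Y Y' : Ob C) (f : Hom X X') (g : Hom Y Y'),
        disj X Y -> disj X' Y' -> heq (addm f g) (addm g f))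
  /\ (forall (u : inj) (X Y : Ob C), disj X Y -> push u (add X Y) = add (push u X) (push u Y))
  /\ (forall (u v : inj) (X X' Y Y' : Ob C) (f : Hom X X') (g : Hom Y Y'),
        disj X Y -> disj X' Y' ->
        heq (actm u v (addm f g)) (addm (actm u v f) (actm u v g))).

Definition is_psmor (C D : psdata) (F : functor C D) : Prop :=
  is_functor F
  /\ (forall (u : inj) (X : Ob C), fob F (push u X) = push u (fob F X))
  /\ (forall (u v : inj) (X Y : Ob C) (f : Hom X Y),
        heq (fhom F (actm u v f)) (actm u v (fhom F f)))
  /\ fob F (zero C) = zero D
  /\ (forall X Y : Ob C, disj X Y -> fob F (add X Y) = add (fob F X) (fob F Y))
  /\ (forall (X X' Y Y' : Ob C) (f : Hom X X') (g : Hom Y Y'),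
        disj X Y -> disj X' Y' -> heq (fhom F (addm f g)) (addm (fhom F f) (fhom F g))).

Record minj (m : nat) := MInj {
  mfun : 'I_m -> nat -> nat;
  minjP : forall (a b : 'I_m) (k l : nat), mfun a k = mfun b l -> a = b /\ k = l }.

Definition slice (m : nat) (phi : minj m) (a : 'I_m) : inj :=
  @Inj (mfun phi a) (fun k l e => proj2 (@minjP m phi a a k l e)).

Fixpoint osum (C : psdata) (I : Type) (s : seq I) (F : I -> Ob C) : Ob C :=
  match s with [::] => zero C | i :: s' => add (F i) (osum s' F) end.

Fixpoint msum (C : psdata) (I : Type) (s : seq I) (F G : I -> Ob C)
  (h : forall i, Hom (F i) (G i)) {struct s} : Hom (osum s F) (osum s G) :=
  match s as s0 return Hom (osum s0 F) (osum s0 G) with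
  | [::] => idm (zero C)
  | i :: s' => addm (h i) (msum s' h)
  end.

Definition pushsum (C : psdata) (Xs : seq (Ob C)) (phi : minj (size Xs)) : Ob C :=
  osum (enum 'I_(size Xs)) (fun a => push (slice phi a) (nth (zero C) Xs a)).

Definition brk (C : psdata) (Xs : seq (Ob C)) (phi' phi : minj (size Xs)) :
  Hom (pushsum phi) (pushsum phi') :=
  msum (enum 'I_(size Xs)) (fun a => brack (slice phi' a) (slice phi a) (nth (zero C) Xs a)).

Record trip (C : psdata) (Xs Ys : seq (Ob C)) := Trip {
  t_in : minj (size Xs);
  t_out : minj (size Ys);
  t_f : Hom (pushsum t_in) (pushsum t_out) }.

Definition tstep (C : psdata) (Xs Ys : seq (Ob C)) (t t' : trip Xs Ys) : Prop :=
  t_f t' = comp (brk (t_out t') (t_out t)) (comp (t_f t) (brk (t_in t) (t_in t'))).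

Definition tequiv (C : psdata) (Xs Ys : seq (Ob C)) : trip Xs Ys -> trip Xs Ys -> Prop :=
  clos_refl_sym_trans _ (@tstep C Xs Ys).

Definition SMor (C : psdata) (Xs Ys : seq (Ob C)) : Type :=
  { P : trip Xs Ys -> Prop | exists t, forall t', P t' <-> tequiv t t' }.

Definition cls (C : psdata) (Xs Ys : seq (Ob C)) (t : trip Xs Ys) : SMor Xs Ys :=
  exist _ (tequiv t) (ex_intro _ t (fun t' => iff_refl _)).

Definition rep (C : psdata) (Xs Ys : seq (Ob C)) (alpha : SMor Xs Ys) : trip Xs Ys :=
  proj1_sig (constructive_indefinite_description _ (proj2_sig alpha)).

Definition smcomp (C : psdata) (Xs Ys Zs : seq (Ob C))
  (beta : SMor Ys Zs) (alpha : SMor Xs Ys) : SMor Xs Zs :=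
  let r := rep alpha in let q := rep beta in
  cls (@Trip _ _ _ (t_in r) (t_out q) (comp (t_f q) (comp (brk (t_in q) (t_out r)) (t_f r)))).

Record pinj := PInj {
  pf : nat -> nat -> nat;
  pinjP : forall a b k l, pf a k = pf b l -> a = b /\ k = l }.

(* <A, X_.> encoded as the list of pairs (a, X_a), a in A, in increasing order *)
Definition ThOb (C : psdata) : Type :=
  { s : seq (nat * Ob C) | sorted ltn (map fst s) }.

Definition thA (C : psdata) (O : ThOb C) : seq nat := map fst (val O).
Definition thX (C : psdata) (O : ThOb C) : seq (Ob C) := map snd (val O).

Lemma canon_proof (phi : pinj) (C : psdata) (O : ThOb C) :
  forall (a b : 'I_(size (thX O))) (k l : nat),
    pf phi (nth 0 (thA O) a) k = pf phi (nth 0 (thA O) b) l -> a = b /\ k = l.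
Proof.
move=> a b k l /pinjP [eab ekl]; split=> //.
have hu : uniq (thA O) by apply: (sorted_uniq ltn_trans ltnn); exact: (valP O).
have ha : a < size (thA O) by rewrite /thA size_map -(size_map snd); exact: ltn_ord.
have hb : b < size (thA O) by rewrite /thA size_map -(size_map snd); exact: ltn_ord.
apply: val_inj; apply/eqP; by rewrite -(nth_uniq 0 ha hb hu) eab.
Qed.

(* phi|_A o (kappa_A x id) *)
Definition canon (phi : pinj) (C : psdata) (O : ThOb C) : minj (size (thX O)) :=
  @MInj _ (fun a k => pf phi (nth 0 (thA O) a) k) (@canon_proof phi C O).

Definition Theta (phi : pinj) (C : psdata) : precat :=
  @PreCat (ThOb C) (fun O O' => SMor (thX O) (thX O'))
    (fun O => cls (@Trip _ _ _ (canon phi O) (canon phi O) (idm _)))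
    (fun O O' O'' beta alpha => smcomp beta alpha).

Lemma S_rep_ex (phi : pinj) (C : psdata) (O O' : ThOb C) (alpha : SMor (thX O) (thX O')) :
  exists f, proj1_sig alpha (@Trip _ _ _ (canon phi O) (canon phi O') f).
Proof.
case: (proj2_sig alpha) => t Ht.
exists (comp (brk (canon phi O') (t_out t)) (comp (t_f t) (brk (t_in t) (canon phi O)))).
apply/Ht; apply: rst_step; reflexivity.
Qed.

(* S_C(alpha) = f for the representative (phi|_B kappa_B, f, phi|_A kappa_A) *)
Definition S_hom (phi : pinj) (C : psdata) (O O' : ThOb C) (alpha : SMor (thX O) (thX O')) :
  Hom (pushsum (canon phi O)) (pushsum (canon phi O')) :=
  proj1_sig (constructive_indefinite_description _ (S_rep_ex phi alpha)).

Definition S_fun (phi : pinj) (C : psdata) : functor (Theta phi C) C :=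
  @Functor (Theta phi C) C (fun O => pushsum (canon phi O)) (fun O O' alpha => S_hom phi alpha).

Lemma thF_proof (C D : psdata) (F : functor C D) (O : ThOb C) :
  sorted ltn (map fst (map (fun p => (p.1, fob F p.2)) (val O))).
Proof. by rewrite -map_comp; exact: (valP O). Qed.

Definition thF (C D : psdata) (F : functor C D) (O : ThOb C) : ThOb D :=
  exist _ (map (fun p => (p.1, fob F p.2)) (val O)) (thF_proof F O).

Definition sameinj (m m' : nat) (p : minj m) (p' : minj m') : Prop :=
  m = m' /\ forall (a : 'I_m) (a' : 'I_m'), val a = val a' -> mfun p a =1 mfun p' a'.

Definition is_SigmaF_image (C D : psdata) (F : functor C D)
  (Xs Ys : seq (Ob C)) (Xs' Ys' : seq (Ob D))
  (alpha : SMor Xs Ys) (beta : SMor Xs' Ys') : Prop :=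
  exists t : trip Xs Ys, proj1_sig alpha t /\
  exists t' : trip Xs' Ys', proj1_sig beta t' /\
    sameinj (t_in t') (t_in t) /\ sameinj (t_out t') (t_out t) /\
    heq (t_f t') (fhom F (t_f t)).

(* Main.v *)
Require Import Defs.
From mathcomp Require Import all_boot.
From Stdlib Require Import ClassicalEpsilon Relation_Operators Classical FunctionalExtensionality ProofIrrelevance PropExtensionality.
Require Import Defs.

Set Implicit Arguments.
Unset Strict Implicit.
Unset Printing Implicit Defensive.


Lemma heq_refl (C : precat) (X Y : Ob C) (f : Hom X Y) : heq f f.
Proof. by exists erefl, erefl. Qed.

Lemma heqE (C : precat) (X Y : Ob C) (f g : Hom X Y) : heq f g <-> f = g.
Proof.
split; last by move=> <-; exact: heq_refl.
case=> e1 [e2]; rewrite (proof_irrelevance _ e1 erefl) (proof_irrelevance _ e2 erefl) //.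
Qed.

Lemma heq_sym (C : precat) (X Y X' Y' : Ob C) (f : Hom X Y) (g : Hom X' Y') :
  heq f g -> heq g f.
Proof. case=> e1 [e2]; subst => /= <-; exact: heq_refl. Qed.

Lemma heq_trans (C : precat) (X Y X' Y' X'' Y'' : Ob C) (f : Hom X Y) (g : Hom X' Y') (h : Hom X'' Y'') :
  heq f g -> heq g h -> heq f h.
Proof. case=> e1 [e2]; subst => /= <-; done. Qed.

Lemma heq_castH (C : precat) (X X' Y Y' : Ob C) (e1 : X = X') (e2 : Y = Y') (f : Hom X Y) :
  heq f (castH e1 e2 f).
Proof. by exists e1, e2. Qed.

Lemma heq_comp (C : precat) (X Y Z X' Y' Z' : Ob C) (f : Hom X Y) (g : Hom Y Z)
  (f' : Hom X' Y') (g' : Hom Y' Z') :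
  heq f f' -> heq g g' -> heq (comp g f) (comp g' f').
Proof.
case=> e1 [e2]; subst => /= <-.
case=> e1 [e2]; subst => /=.
rewrite (proof_irrelevance _ e1 erefl) /= => <-; exact: heq_refl.
Qed.

Lemma castH_idm (C : precat) (X Y : Ob C) (e : X = Y) : castH e e (idm X) = idm Y.
Proof. by case: Y / e. Qed.

Lemma castH_comp (C : precat) (X Y Z X' Y' Z' : Ob C) (e1 : X = X') (e2 : Y = Y') (e3 : Z = Z')
  (f : Hom X Y) (g : Hom Y Z) :
  castH e1 e3 (comp g f) = comp (castH e2 e3 g) (castH e1 e2 f).
Proof. by case: X' / e1; case: Y' / e2; case: Z' / e3. Qed.

Lemma inj_ext (u v : inj) : u =1 v -> u = v.
Proof.
case: u => f fP; case: v => g gP /= /functional_extensionality e; subst.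
by rewrite (proof_irrelevance _ fP gP).
Qed.


Definition swapn (b c n : nat) : nat := if n == b then c else if n == c then b else n.

Lemma swapnK b c : involutive (swapn b c).
Proof.
move=> n; rewrite /swapn.
case: (eqVneq n b) => [->|nb].
  by rewrite eqxx; case: (eqVneq c b) => [->|cb]; rewrite ?eqxx // (negbTE cb) eqxx.
case: (eqVneq n c) => [->|nc]; first by rewrite eqxx.
by rewrite (negbTE nb) (negbTE nc).
Qed.

Lemma ext_bij (A : seq nat) (u : nat -> nat) : injective u ->
  exists w winv : nat -> nat, [/\ cancel w winv, cancel winv w & {in A, w =1 u}].
Proof.
move=> uI; elim: A => [|a A [w [winv [wK winvK wA]]]].
  by exists id, id.
exists (swapn (w a) (u a) \o w), (winv \o swapn (w a) (u a)); split.
- by move=> n /=; rewrite swapnK wK.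
- by move=> n /=; rewrite winvK swapnK.
move=> x; rewrite inE => /orP [/eqP ->|xA] /=.
  by rewrite /swapn eqxx.
rewrite /swapn.
case: (eqVneq x a) => [->|xa]; first by rewrite eqxx.
have h1 : w x != w a by apply: contra xa => /eqP /(can_inj wK) ->.
have h2 : w x != u a by rewrite (wA x xA); apply: contra xa => /eqP /uI ->.
by rewrite (negbTE h1) (negbTE h2) (wA x xA).
Qed.

Section PS.
Variable C : psdata.
Hypothesis HC : is_parsummable C.

Lemma c_idl (X Y : Ob C) (f : Hom X Y) : comp (idm Y) f = f.
Proof. by case: HC => [[h _] _]. Qed.
Lemma c_idr (X Y : Ob C) (f : Hom X Y) : comp f (idm X) = f.
Proof. by case: HC => [[_ [h _]] _]. Qed.
Lemma c_assoc (X Y Z W : Ob C) (f : Hom X Y) (g : Hom Y Z) (h : Hom Z W) :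
  comp (comp h g) f = comp h (comp g f).
Proof. by case: HC => [[_ [_ h']] _]; rewrite h'. Qed.
Lemma actm_id (u : inj) (X : Ob C) : actm u u (idm X) = idm (push u X).
Proof. by case: HC => [_ [h _]]. Qed.
Lemma actm_comp (u v w : inj) (X Y Z : Ob C) (f : Hom X Y) (g : Hom Y Z) :
  comp (actm v w g) (actm u v f) = actm u w (comp g f).
Proof. by case: HC => [_ [_ [h _]]]. Qed.
Lemma push_comp (u v : inj) (X : Ob C) : push (icomp u v) X = push u (push v X).
Proof. by case: HC => [_ [_ [_ [h _]]]]. Qed.
Lemma push_iid (X : Ob C) : push iid X = X.
Proof. by case: HC => [_ [_ [_ [_ [_ [h _]]]]]]. Qed.
Lemma fin_supp (X : Ob C) : exists A : seq nat, supports A X.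
Proof. by case: HC => [_ [_ [_ [_ [_ [_ [_ [h _]]]]]]]]. Qed.
Lemma zero_supp i : ~ supp (zero C) i.
Proof. by case: HC => [_ [_ [_ [_ [_ [_ [_ [_ [h _]]]]]]]]]. Qed.
Lemma addm_id (X Y : Ob C) : disj X Y -> addm (idm X) (idm Y) = idm (add X Y).
Proof. by case: HC => [_ [_ [_ [_ [_ [_ [_ [_ [_ [h _]]]]]]]]]]; apply: h. Qed.
Lemma addm_comp (X X' X'' Y Y' Y'' : Ob C) (f : Hom X X') (f' : Hom X' X'')
             (g : Hom Y Y') (g' : Hom Y' Y'') :
        disj X Y -> disj X' Y' -> disj X'' Y'' ->
        addm (comp f' f) (comp g' g) = comp (addm f' g') (addm f g).
Proof. by case: HC => [_ [_ [_ [_ [_ [_ [_ [_ [_ [_ [h _]]]]]]]]]]]; apply: h. Qed.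
Lemma add_zero (X : Ob C) : add X (zero C) = X.
Proof. by case: HC => [_ [_ [_ [_ [_ [_ [_ [_ [_ [_ [_ [h _]]]]]]]]]]]]. Qed.
Lemma push_add (u : inj) (X Y : Ob C) : disj X Y -> push u (add X Y) = add (push u X) (push u Y).
Proof.
by case: HC => [_ [_ [_ [_ [_ [_ [_ [_ [_ [_ [_ [_ [_ [_ [_ [_ [_ [h _]]]]]]]]]]]]]]]]]]; apply: h.
Qed.

Lemma agree (A : seq nat) (X : Ob C) (u v : inj) :
  supports A X -> {in A, u =1 v} -> push u X = push v X.
Proof.
move=> sA uv.
have [w [winv [wK winvK wA]]] := ext_bij A (@injP u).
have wI : injective w := can_inj wK.
have winvI : injective winv := can_inj winvK.
pose W := Inj wI.
have key : forall z : inj, {in A, z =1 u} -> push z X = push W X.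
  move=> z zu.
  pose S := Inj (inj_comp winvI (@injP z)).
  have -> : z = icomp W S by apply: inj_ext => n /=; rewrite winvK.
  rewrite push_comp; congr push; apply: sA => a aA /=.
  by rewrite zu // -(wA a aA) wK.
rewrite key // (key v) // => a aA; by rewrite uv.
Qed.

Lemma supp_push (u : inj) (X : Ob C) i : supp (push u X) i -> exists n, i = u n.
Proof.
have [A sA] := fin_supp X.
move=> H.
have : i \in map u A.
  apply: H => w wf.
  rewrite -push_comp; apply: (agree sA) => a aA /=.
  by apply: wf; apply: map_f.
by case/mapP => n _ ->; exists n.
Qed.

Lemma supp_add (X Y : Ob C) i : disj X Y -> supp (add X Y) i -> supp X i \/ supp Y i.
Proof.
move=> dXY H; apply: NNPP => /not_or_and [nX nY].
have [A [sA iA]] : exists A, supports A X /\ i \notin A.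
  apply: NNPP => hh; apply: nX => A sA; apply: NNPP => iA; apply: hh; exists A; split=> //.
  by apply/negP.
have [B [sB iB]] : exists B, supports B Y /\ i \notin B.
  apply: NNPP => hh; apply: nY => B sB; apply: NNPP => iB; apply: hh; exists B; split=> //.
  by apply/negP.
have : i \in A ++ B.
  apply: H => u uf; rewrite push_add //.
  rewrite sA; last by move=> a aA; apply: uf; rewrite mem_cat aA.
  by rewrite sB //; move=> a aA; apply: uf; rewrite mem_cat aA orbT.
by rewrite mem_cat (negbTE iA) (negbTE iB).
Qed.

Fixpoint dj (I : Type) (s : seq I) (F : I -> Ob C) : Prop :=
  match s with [::] => True | i :: s' => disj (F i) (osum s' F) /\ dj s' F end.

Lemma dj_region (I : eqType) (s : seq I) (F : I -> Ob C) (R : I -> nat -> Prop) :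
  (forall i k, supp (F i) k -> R i k) -> (forall i j k, R i k -> R j k -> i = j) -> uniq s ->
  dj s F /\ (forall k, supp (osum s F) k -> exists2 i, i \in s & R i k).
Proof.
move=> HR Hu; elim: s => [|a s IH] /=.
  by split=> // k /zero_supp.
case/andP => as_ us; case: (IH us) => dj1 sp1.
have dd : disj (F a) (osum s F).
  move=> k /HR Ra /sp1 [i is_ Ri]; have := Hu _ _ _ Ra Ri => e; subst.
  by rewrite is_ in as_.
split=> // k /(supp_add dd) [/HR|/sp1 [i is_ Ri]].
  by exists a => //; rewrite inE eqxx.
by exists i => //; rewrite inE is_ orbT.
Qed.

Lemma msum_id (I : Type) (s : seq I) (F : I -> Ob C) :
  dj s F -> msum s (fun i => idm (F i)) = idm (osum s F).
Proof.
elim: s => [|a s IH] //= [d1 d2].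
by rewrite IH // addm_id.
Qed.

Lemma msum_comp (I : Type) (s : seq I) (F G H : I -> Ob C)
  (f : forall i, Hom (F i) (G i)) (g : forall i, Hom (G i) (H i)) :
  dj s F -> dj s G -> dj s H ->
  msum s (fun i => comp (g i) (f i)) = comp (msum s g) (msum s f).
Proof.
elim: s => [|a s IH] /=; first by move=> *; rewrite c_idl.
move=> [dF1 dF2] [dG1 dG2] [dH1 dH2].
by rewrite IH // addm_comp.
Qed.

End PS.


Section PS2.
Variable C : psdata.
Hypothesis HC : is_parsummable C.

Definition PF (Xs : seq (Ob C)) (p : minj (size Xs)) (a : 'I_(size Xs)) : Ob C :=
  push (slice p a) (nth (zero C) Xs a).

Lemma dj_PF (Xs : seq (Ob C)) (p : minj (size Xs)) :
  dj (enum 'I_(size Xs)) (PF p) /\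
  (forall k, supp (pushsum p) k -> exists2 a, a \in enum 'I_(size Xs) & exists n, k = mfun p a n).
Proof.
apply: (dj_region HC (R := fun a k => exists n, k = mfun p a n)).
- by move=> a k /(supp_push HC) [n ->]; exists n.
- by move=> a b k [n ->] [m /esym /minjP [-> _]].
- exact: enum_uniq.
Qed.

Lemma brk_id (Xs : seq (Ob C)) (p : minj (size Xs)) : brk p p = idm (pushsum p).
Proof.
rewrite /brk /brack.
have -> : (fun a => actm (slice p a) (slice p a) (idm (nth (zero C) Xs a)))
  = (fun a => idm (PF p a)).
  by apply: functional_extensionality_dep => a; rewrite actm_id.
by rewrite msum_id //; case: (dj_PF p).
Qed.

Lemma brk_comp (Xs : seq (Ob C)) (p0 p1 p2 : minj (size Xs)) :
  comp (brk p2 p1) (brk p1 p0) = brk p2 p0.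
Proof.
rewrite /brk -msum_comp //; try by case: (dj_PF p0); try by case: (dj_PF p1); try by case: (dj_PF p2).
congr msum; apply: functional_extensionality_dep => a.
cbv beta; rewrite /brack actm_comp //.
by rewrite c_idl.
Qed.

Lemma brk_comp' (Xs : seq (Ob C)) (p0 p1 p2 : minj (size Xs)) (Z : Ob C) (h : Hom Z (pushsum p0)) :
  comp (brk p2 p1) (comp (brk p1 p0) h) = comp (brk p2 p0) h.
Proof. by rewrite -c_assoc // brk_comp. Qed.

Definition NN (Xs Ys : seq (Ob C)) (p : minj (size Xs)) (q : minj (size Ys)) (t : trip Xs Ys) :
  Hom (pushsum p) (pushsum q) :=
  comp (brk q (t_out t)) (comp (t_f t) (brk (t_in t) p)).

Lemma NN_step (Xs Ys : seq (Ob C)) p q (t t' : trip Xs Ys) :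
  tstep t t' -> NN p q t = NN p q t'.
Proof.
rewrite /tstep /NN => ->.
rewrite !c_assoc // brk_comp' //.
congr comp; congr comp.
by rewrite brk_comp.
Qed.

Lemma NN_equiv (Xs Ys : seq (Ob C)) p q (t t' : trip Xs Ys) :
  tequiv t t' -> NN p q t = NN p q t'.
Proof.
elim=> [x y /NN_step //| x // | x y _ -> // | x y z _ -> _ -> //].
Qed.

Lemma NN_canon (Xs Ys : seq (Ob C)) p q (f : Hom (pushsum p) (pushsum q)) :
  NN p q (@Trip _ Xs Ys p q f) = f.
Proof. rewrite /NN !brk_id //; cbn [t_f t_in t_out]. by rewrite c_idl // c_idr. Qed.

Lemma tequiv_canon (Xs Ys : seq (Ob C)) p q (t : trip Xs Ys) :
  tequiv t (@Trip _ Xs Ys p q (NN p q t)).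
Proof. by apply: rst_step. Qed.

Lemma tequiv_sym (Xs Ys : seq (Ob C)) (t t' : trip Xs Ys) : tequiv t t' -> tequiv t' t.
Proof. exact: rst_sym. Qed.
Lemma tequiv_trans (Xs Ys : seq (Ob C)) (t t' t'' : trip Xs Ys) :
  tequiv t t' -> tequiv t' t'' -> tequiv t t''.
Proof. exact: rst_trans. Qed.

Lemma SMor_gen (Xs Ys : seq (Ob C)) (alpha : SMor Xs Ys) t :
  proj1_sig alpha t -> forall x, proj1_sig alpha x <-> tequiv t x.
Proof.
case: alpha => P [t0 H] /= Pt x; rewrite H; move: Pt; rewrite H => e0.
split=> h; [exact: tequiv_trans (tequiv_sym e0) h | exact: tequiv_trans e0 h].
Qed.

Lemma SMor_ext (Xs Ys : seq (Ob C)) (a b : SMor Xs Ys) :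
  (forall t, proj1_sig a t <-> proj1_sig b t) -> a = b.
Proof.
case: a => P pP; case: b => Q pQ /= H.
have e : P = Q by apply: functional_extensionality => t; apply: propositional_extensionality.
subst; congr exist; apply: proof_irrelevance.
Qed.

Lemma NN_mem (Xs Ys : seq (Ob C)) p q (alpha : SMor Xs Ys) t t' :
  proj1_sig alpha t -> proj1_sig alpha t' -> NN p q t = NN p q t'.
Proof. by move=> h /(SMor_gen h) /NN_equiv. Qed.

Lemma SMor_NN (Xs Ys : seq (Ob C)) p q (a b : SMor Xs Ys) t t' :
  proj1_sig a t -> proj1_sig b t' -> NN p q t = NN p q t' -> a = b.
Proof.
move=> ha hb e; apply: SMor_ext => x; rewrite (SMor_gen ha) (SMor_gen hb).
have ett' : tequiv t t'.
  apply: tequiv_trans (tequiv_canon p q t) _; rewrite e; apply: tequiv_sym; exact: tequiv_canon.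
split=> h; [exact: tequiv_trans (tequiv_sym ett') h | exact: tequiv_trans ett' h].
Qed.

Lemma rep_mem (Xs Ys : seq (Ob C)) (alpha : SMor Xs Ys) : proj1_sig alpha (rep alpha).
Proof.
rewrite /rep; case: constructive_indefinite_description => t H /=.
by apply/H; apply: rst_refl.
Qed.

Lemma cls_mem (Xs Ys : seq (Ob C)) (t : trip Xs Ys) : proj1_sig (cls t) t.
Proof. exact: rst_refl. Qed.

Variable phi : pinj.

Lemma S_hom_NN (O O' : ThOb C) (alpha : SMor (thX O) (thX O')) t :
  proj1_sig alpha t -> S_hom phi alpha = NN (canon phi O) (canon phi O') t.
Proof.
move=> ht; rewrite /S_hom; case: constructive_indefinite_description => f Hf /=.
by rewrite -(NN_mem _ _ Hf ht) NN_canon.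
Qed.

End PS2.


Lemma equiv_ff_es (T C : precat) (S : functor T C) :
  is_category C -> is_functor S ->
  (forall (X Y : Ob T) (f g : Hom X Y), fhom S f = fhom S g -> f = g) ->
  (forall (X Y : Ob T) (h : Hom (fob S X) (fob S Y)), exists f, fhom S f = h) ->
  (forall Y : Ob C, exists X (e : Hom (fob S X) Y), is_iso e) ->
  is_equivalence S.
Proof.
move=> [idl [idr ass]] [Sid Scomp] faith full es.
split; first by split.
pose pre X Y h := proj1_sig (constructive_indefinite_description _ (full X Y h)).
have preK : forall X Y h, fhom S (pre X Y h) = h.
  by move=> X Y h; rewrite /pre; case: constructive_indefinite_description.
pose G0 Y := proj1_sig (constructive_indefinite_description _ (es Y)).
have G0P : forall Y, exists e : Hom (fob S (G0 Y)) Y, is_iso e.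
  by move=> Y; rewrite /G0; case: constructive_indefinite_description.
pose e Y := proj1_sig (constructive_indefinite_description _ (G0P Y)).
have eP : forall Y, is_iso (e Y).
  by move=> Y; rewrite /e; case: constructive_indefinite_description.
pose ei Y := proj1_sig (constructive_indefinite_description _ (eP Y)).
have eiP : forall Y, comp (ei Y) (e Y) = idm _ /\ comp (e Y) (ei Y) = idm Y.
  by move=> Y; rewrite /ei; case: constructive_indefinite_description.
pose G := @Functor C T G0 (fun Y Y' g => pre _ _ (comp (ei Y') (comp g (e Y)))).
exists G; split; [split|split].
- move=> Y; apply: faith; rewrite preK Sid idl.
  by case: (eiP Y).
- move=> Y Y' Y'' g g'; apply: faith; rewrite Scomp !preK /=.
  rewrite -!ass; congr comp; congr comp; rewrite ass.
  by case: (eiP Y') => _ ->; rewrite idl.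
- exists (fun X => pre _ _ (ei (fob S X))); split.
    move=> X; exists (pre _ _ (e (fob S X))); split; apply: faith;
      rewrite Scomp !preK Sid; by case: (eiP (fob S X)).
  move=> X Y f /=; apply: faith; rewrite !Scomp !preK.
  rewrite -!ass; congr comp.
  by case: (eiP (fob S X)) => _ ->; rewrite idr.
- exists e; split; first by [].
  move=> Y Y' g /=; rewrite preK !ass.
  by case: (eiP Y') => _ ->; rewrite idl.
Qed.


Section Equiv.
Variable C : psdata.
Hypothesis HC : is_parsummable C.
Variable phi : pinj.

Lemma iso_push (Z X : Ob C) (u : inj) (E : Z = push u X) : exists e : Hom Z X, is_iso e.
Proof.
exists (castH (esym E) (push_iid HC X) (brack iid u X)).
exists (castH (push_iid HC X) (esym E) (brack u iid X)); split.
- rewrite -castH_comp /brack actm_comp // c_idl // actm_id //; exact: castH_idm.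
- rewrite -castH_comp /brack actm_comp // c_idl // actm_id //; exact: castH_idm.
Qed.

Definition GOb (X : Ob C) : ThOb C := exist _ [:: (0, X)] isT.

Lemma GOb_E (X : Ob C) : pushsum (canon phi (GOb X)) = push (slice (canon phi (GOb X)) ord0) X.
Proof.
rewrite /pushsum /=.
rewrite enum_ordSl enum_ord0 /=.
by rewrite add_zero.
Qed.

Lemma S_is_equiv : is_equivalence (S_fun phi C).
Proof.
have Hcat : is_category C by case: HC.
have Sfun : is_functor (S_fun phi C).
  split.
  - move=> O /=; rewrite (S_hom_NN HC phi (cls_mem _)) NN_canon //.
  - move=> O O' O'' a b /=.
    rewrite /smcomp (S_hom_NN HC phi (cls_mem _)).
    rewrite (S_hom_NN HC phi (rep_mem a)) (S_hom_NN HC phi (rep_mem b)).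
    rewrite /NN /= !c_assoc //.
    by rewrite brk_comp'.
apply: equiv_ff_es => //.
- move=> O O' a b /= e.
  apply: (@SMor_NN C _ _ (canon phi O) (canon phi O') a b _ _ (rep_mem a) (rep_mem b)).
  by rewrite -!(S_hom_NN HC phi (rep_mem _)).
- move=> O O' h; exists (cls (@Trip _ _ _ (canon phi O) (canon phi O') h)).
  by rewrite /= (S_hom_NN HC phi (cls_mem _)) NN_canon.
- move=> X; exists (GOb X); exact: iso_push (GOb_E X).
Qed.

End Equiv.


Lemma heq_addm (C : psdata) (X X' Y Y' X1 X1' Y1 Y1' : Ob C)
  (f : Hom X X') (g : Hom Y Y') (f1 : Hom X1 X1') (g1 : Hom Y1 Y1') :
  heq f f1 -> heq g g1 -> heq (addm f g) (addm f1 g1).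
Proof.
case=> e1 [e2]; subst => /= <-.
case=> e1 [e2]; subst => /= <-; exact: heq_refl.
Qed.

Lemma heq_idm (C : precat) (X Y : Ob C) : X = Y -> heq (idm X) (idm Y).
Proof. by move=> ->; exact: heq_refl. Qed.

Lemma heq_actm (C : psdata) (u v : inj) (X Y X' Y' : Ob C) (f : Hom X Y) (f' : Hom X' Y') :
  heq f f' -> heq (actm u v f) (actm u v f').
Proof. case=> e1 [e2]; subst => /= <-; exact: heq_refl. Qed.

Lemma msum_heq (C : psdata) (I : eqType) (s : seq I) (F G F' G' : I -> Ob C)
  (h : forall i, Hom (F i) (G i)) (h' : forall i, Hom (F' i) (G' i)) :
  (forall i, i \in s -> heq (h i) (h' i)) -> heq (msum s h) (msum s h').
Proof.
elim: s => [|a s IH] H /=; first exact: heq_refl.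
apply: heq_addm; first by apply: H; rewrite inE eqxx.
by apply: IH => i is_; apply: H; rewrite inE is_ orbT.
Qed.

Lemma osum_ext (C : psdata) (I : eqType) (s : seq I) (F F' : I -> Ob C) :
  (forall i, i \in s -> F i = F' i) -> osum s F = osum s F'.
Proof.
elim: s => [|a s IH] H //=.
rewrite H ?inE ?eqxx // IH //.
by move=> i is_; apply: H; rewrite inE is_ orbT.
Qed.

Lemma osum_map (C : psdata) (I J : Type) (f : J -> I) (s : seq J) (F : I -> Ob C) :
  osum (map f s) F = osum s (fun j => F (f j)).
Proof. by elim: s => //= a s ->. Qed.

Lemma msum_map (C : psdata) (I J : Type) (f : J -> I) (s : seq J) (F G : I -> Ob C)
  (h : forall i, Hom (F i) (G i)) :
  heq (msum (map f s) h) (msum s (fun j => h (f j))).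
Proof.
elim: s => [|a s IH] /=; first exact: heq_refl.
by apply: heq_addm => //; exact: heq_refl.
Qed.

Definition sl (m : nat) (p : minj m) (i : nat) : inj :=
  match (insub i : option 'I_m) with Some a => slice p a | None => iid end.

Lemma sl_val (m : nat) (p : minj m) (a : 'I_m) : sl p (val a) = slice p a.
Proof. by rewrite /sl valK. Qed.

Lemma sl_same (m m' : nat) (p' : minj m') (p : minj m) i :
  sameinj p' p -> sl p' i = sl p i.
Proof.
case=> e H; subst m'.
rewrite /sl; case: (ltnP i m) => [lt|ge].
  rewrite (insubT (fun i => i < m) lt).
  by apply: inj_ext => n /=; apply: H.
by rewrite !insubN // -leqNgt.
Qed.

Lemma pushsum_iota (C : psdata) (Xs : seq (Ob C)) (p : minj (size Xs)) :
  pushsum p = osum (iota 0 (size Xs)) (fun i => push (sl p i) (nth (zero C) Xs i)).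
Proof.
rewrite /pushsum -val_enum_ord osum_map; apply: osum_ext => a _.
by rewrite sl_val.
Qed.

Lemma brk_iota (C : psdata) (Xs : seq (Ob C)) (q p : minj (size Xs)) :
  heq (brk q p) (msum (iota 0 (size Xs)) (fun i => brack (sl q i) (sl p i) (nth (zero C) Xs i))).
Proof.
rewrite -val_enum_ord; apply: heq_trans (heq_sym (msum_map _ _ _)).
apply: msum_heq => a _; rewrite !sl_val; exact: heq_refl.
Qed.

Definition mcast (m n : nat) (e : n = m) (p : minj m) : minj n.
Proof.
refine (@MInj n (fun a k => mfun p (cast_ord e a) k) _).
move=> a b k l /minjP [/cast_ord_inj -> ->]; done.
Defined.

Lemma mcast_same (m n : nat) (e : n = m) (p : minj m) : sameinj (mcast e p) p.
Proof.
split=> // a' a ea k /=; congr mfun; apply: val_inj; by rewrite /= ea.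
Qed.

Section Fun.
Variables C D : psdata.
Hypothesis HC : is_parsummable C.
Hypothesis HD : is_parsummable D.
Variable F : functor C D.
Hypothesis HF : is_psmor F.

Lemma F_id (X : Ob C) : fhom F (idm X) = idm (fob F X).
Proof. by case: HF => [[h _] _]. Qed.
Lemma F_comp (X Y Z : Ob C) (f : Hom X Y) (g : Hom Y Z) :
  fhom F (comp g f) = comp (fhom F g) (fhom F f).
Proof. by case: HF => [[_ h] _]. Qed.
Lemma F_push (u : inj) (X : Ob C) : fob F (push u X) = push u (fob F X).
Proof. by case: HF => [_ [h _]]. Qed.
Lemma F_actm (u v : inj) (X Y : Ob C) (f : Hom X Y) :
  heq (fhom F (actm u v f)) (actm u v (fhom F f)).
Proof. by case: HF => [_ [_ [h _]]]. Qed.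
Lemma F_zero : fob F (zero C) = zero D.
Proof. by case: HF => [_ [_ [_ [h _]]]]. Qed.
Lemma F_add (X Y : Ob C) : disj X Y -> fob F (add X Y) = add (fob F X) (fob F Y).
Proof. by case: HF => [_ [_ [_ [_ [h _]]]]]; apply: h. Qed.
Lemma F_addm (X X' Y Y' : Ob C) (f : Hom X X') (g : Hom Y Y') :
  disj X Y -> disj X' Y' -> heq (fhom F (addm f g)) (addm (fhom F f) (fhom F g)).
Proof. by case: HF => [_ [_ [_ [_ [_ h]]]]]; apply: h. Qed.

Lemma F_osum (I : Type) (s : seq I) (G : I -> Ob C) :
  dj s G -> fob F (osum s G) = osum s (fun i => fob F (G i)).
Proof.
elim: s => [|a s IH] /=; first by rewrite F_zero.
by case=> d1 d2; rewrite F_add // IH.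
Qed.

Lemma F_msum (I : Type) (s : seq I) (G H : I -> Ob C) (h : forall i, Hom (G i) (H i)) :
  dj s G -> dj s H -> heq (fhom F (msum s h)) (msum s (fun i => fhom F (h i))).
Proof.
elim: s => [|a s IH] /=.
  by move=> _ _; rewrite F_id; apply: heq_idm; exact: F_zero.
case=> d1 d2 [d3 d4]; apply: heq_trans (F_addm _ _ d1 d3) _.
apply: heq_addm; [exact: heq_refl | exact: IH].
Qed.

Lemma F_pushsum_enum (Zs : seq (Ob C)) (q : minj (size Zs)) :
  fob F (pushsum q) = osum (iota 0 (size Zs)) (fun i => push (sl q i) (fob F (nth (zero C) Zs i))).
Proof.
rewrite /pushsum F_osum; last by case: (dj_PF HC q).
rewrite -val_enum_ord osum_map; apply: osum_ext => a _.
by rewrite sl_val F_push.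
Qed.

Lemma Fpushsum (Zs : seq (Ob C)) (Ys : seq (Ob D)) (q' : minj (size Ys)) (q : minj (size Zs)) :
  Ys = map (fob F) Zs -> sameinj q' q -> pushsum q' = fob F (pushsum q).
Proof.
move=> eY sq; rewrite F_pushsum_enum pushsum_iota.
subst Ys.
have -> : iota 0 (size (map (fob F) Zs)) = iota 0 (size Zs) by rewrite size_map.
apply: osum_ext => i; rewrite mem_iota add0n => /andP [_ iz].
by rewrite (sl_same i sq) (nth_map (zero C)) // F_zero.
Qed.

Lemma Fbrk (Zs : seq (Ob C)) (Ys : seq (Ob D)) (q1' q2' : minj (size Ys)) (q1 q2 : minj (size Zs)) :
  Ys = map (fob F) Zs -> sameinj q1' q1 -> sameinj q2' q2 ->
  heq (brk q1' q2') (fhom F (brk q1 q2)).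
Proof.
move=> eY s1 s2.
apply: heq_trans (brk_iota _ _) _.
apply: heq_sym.
rewrite /brk.
have dq1 := proj1 (dj_PF HC q1).
have dq2 := proj1 (dj_PF HC q2).
apply: heq_trans; first exact: F_msum dq2 dq1.
have H1 : heq (msum (enum 'I_(size Zs)) (fun a => fhom F (brack (slice q1 a) (slice q2 a) (nth (zero C) Zs a))))
   (msum (enum 'I_(size Zs)) (fun a => actm (slice q2 a) (slice q1 a) (idm (fob F (nth (zero C) Zs a))))).
  apply: msum_heq => a _; apply: heq_trans (F_actm _ _ _) _; rewrite F_id; exact: heq_refl.
refine (heq_trans H1 _).
subst Ys.
have -> : iota 0 (size (map (fob F) Zs)) = iota 0 (size Zs) by rewrite size_map.
rewrite -val_enum_ord; refine (heq_trans _ (heq_sym (msum_map _ _ _))).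
apply: msum_heq => a _.
rewrite /brack (sl_same _ s1) (sl_same _ s2) !sl_val.
apply: heq_actm; apply: heq_idm.
by rewrite (nth_map (zero C)) ?ltn_ord.
Qed.

End Fun.


Lemma thX_thF (C D : psdata) (F : functor C D) (O : ThOb C) :
  thX (thF F O) = map (fob F) (thX O).
Proof. by rewrite /thX /= -!map_comp. Qed.

Lemma thA_thF (C D : psdata) (F : functor C D) (O : ThOb C) :
  thA (thF F O) = thA O.
Proof. by rewrite /thA /= -!map_comp. Qed.

Lemma canon_same (phi : pinj) (C D : psdata) (F : functor C D) (O : ThOb C) :
  sameinj (canon phi (thF F O)) (canon phi O).
Proof.
split; first by rewrite thX_thF size_map.
by move=> a' a ea k /=; rewrite thA_thF ea.
Qed.

Theorem lemma3p23 (phi : pinj) :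
  (forall C : psdata, is_parsummable C -> is_equivalence (S_fun phi C)) /\
  (forall (C D : psdata) (F : functor C D),
     is_parsummable C -> is_parsummable D -> is_psmor F ->
     (forall O : ThOb C, fob (S_fun phi D) (thF F O) = fob F (fob (S_fun phi C) O)) /\
     (forall (O O' : ThOb C) (alpha : @Hom (Theta phi C) O O'),
        (exists beta : @Hom (Theta phi D) (thF F O) (thF F O'),
            is_SigmaF_image F alpha beta) /\
        (forall beta : @Hom (Theta phi D) (thF F O) (thF F O'),
            is_SigmaF_image F alpha beta ->
            heq (fhom (S_fun phi D) beta) (fhom F (fhom (S_fun phi C) alpha))))).
Proof.
split; first by move=> C HC; exact: S_is_equiv.
move=> C D F HC HD HF; split.
  move=> O /=; apply: (Fpushsum HC HF (thX_thF F O)); exact: canon_same.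
move=> O O' alpha; split.
- pose t := rep alpha.
  have Ein : size (thX (thF F O)) = size (thX O) by rewrite thX_thF size_map.
  have Eout : size (thX (thF F O')) = size (thX O') by rewrite thX_thF size_map.
  pose qi := mcast Ein (t_in t).
  pose qo := mcast Eout (t_out t).
  have E1 : pushsum qi = fob F (pushsum (t_in t)).
    apply: (Fpushsum HC HF (thX_thF F O)); exact: mcast_same.
  have E2 : pushsum qo = fob F (pushsum (t_out t)).
    apply: (Fpushsum HC HF (thX_thF F O')); exact: mcast_same.
  pose t' := @Trip _ _ _ qi qo (castH (esym E1) (esym E2) (fhom F (t_f t))).
  exists (cls t'); exists t; split; first exact: rep_mem.
  exists t'; split; first exact: cls_mem.
  split; first exact: mcast_same.
  split; first exact: mcast_same.
  apply: heq_sym; exact: heq_castH.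
- move=> beta [t [ta [t' [tb [s1 [s2 hf]]]]]].
  rewrite /= (S_hom_NN HD phi tb) (S_hom_NN HC phi ta) /NN !(F_comp HF).
  apply: heq_comp; last first.
    apply: (Fbrk HC HF (thX_thF F O')) => //; exact: canon_same.
  apply: heq_comp => //.
  apply: (Fbrk HC HF (thX_thF F O)) => //; exact: canon_same.
Qed.
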